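(* Let $X=[0,1[$, let $\widehat{\operatorname{PC}^{\bowtie}}$ be the group of all bijections $X\to X$ that are continuous outside a finite subset of $X$, and let $\operatorname{PC}^{\bowtie}=\widehat{\operatorname{PC}^{\bowtie}}/{\mathfrak S}_{\mathrm{fin}}$. Let $G$ be any subgroup of $\operatorname{PC}^{\bowtie}$. Then the Kapoudjian class of $G$ is zero; that is, the central extension $0\to \mathbb{Z}/2\mathbb{Z}={\mathfrak S}_{\mathrm{fin}}/{\mathfrak A}_{\mathrm{fin}}\to \widehat{G}/{\mathfrak A}_{\mathrm{fin}}\to G\to 1$ splits.
   Context: ${\mathfrak S}_{\mathrm{fin}}$ denotes the group of finitely supported permutations of $X$ (a normal subgroup of $\widehat{\operatorname{PC}^{\bowtie}}$ and of the group ${\mathfrak S}(X)$ of all bijections of $X$), and ${\mathfrak A}_{\mathrm{fin}}$ its subgroup of even permutations (kernel of the classical signature), which is normal in ${\mathfrak S}(X)$. For a subgroup $G$ of ${\mathfrak S}(X)/{\mathfrak S}_{\mathrm{fin}}$, $\widehat{G}$ denotes its inverse image in ${\mathfrak S}(X)$. The Kapoudjian class of $G$ is the class in $H^2(G,\mathbb{Z}/2\mathbb{Z})$ of the central extension $0\to {\mathfrak S}_{\mathrm{fin}}/{\mathfrak A}_{\mathrm{fin}}\cong\mathbb{Z}/2\mathbb{Z}\to \widehat{G}/{\mathfrak A}_{\mathrm{fin}}\to G\to 1$. *)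

(* Defs.v *)
From Stdlib Require Import Reals List Arith.
Open Scope R_scope.

Definition X : Type := {x : R | 0 <= x < 1}.
Definition xval (x : X) : R := proj1_sig x.

Definition Xmap := X -> X.
Definition comp (g h : Xmap) : Xmap := fun x => g (h x).
Definition is_inverse (f g : Xmap) : Prop :=
  (forall x, g (f x) = x) /\ (forall x, f (g x) = x).
Definition is_bij (f : Xmap) : Prop := exists g, is_inverse f g.

Definition cont_at (f : Xmap) (x : X) : Prop :=
  forall eps, 0 < eps -> exists delta, 0 < delta /\
    forall y : X, Rabs (xval y - xval x) < delta ->
      Rabs (xval (f y) - xval (f x)) < eps.

Definition PC_hat (f : Xmap) : Prop :=
  is_bij f /\ exists F : list X, forall x, ~ In x F -> cont_at f x.

Definition S_fin (f : Xmap) : Prop :=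
  is_bij f /\ exists l : list X, forall x, f x <> x -> In x l.

Definition swap (a b : X) : Xmap := fun x =>
  if Req_EM_T (xval x) (xval a) then b
  else if Req_EM_T (xval x) (xval b) then a else x.

Definition A_fin (f : Xmap) : Prop :=
  exists l : list (X * X),
    Nat.Even (length l) /\
    (forall p, In p l -> fst p <> snd p) /\
    forall x, f x = fold_right (fun p y => swap (fst p) (snd p) y) x l.

(** [cong_mod P g h] : g P = h P as left cosets, i.e. g^{-1} h \in P. *)
Definition cong_mod (P : Xmap -> Prop) (g h : Xmap) : Prop :=
  exists gi, is_inverse g gi /\ P (comp gi h).

Definition subgroup_PC_hat (H : Xmap -> Prop) : Prop :=
  (forall f, H f -> PC_hat f) /\
  H (fun x => x) /\
  (forall f g, H f -> H g -> H (comp f g)) /\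
  (forall f g, H f -> is_inverse f g -> H g).

(** The Kapoudjian class of G = Hhat / S_fin vanishes: there is a group
    homomorphism sigma : G -> Hhat / A_fin with pi o sigma = id.
    sigma is encoded by a representative Xmap s : sigma(g S_fin) = s(g) A_fin. *)
Definition kapoudjian_split (Hhat : Xmap -> Prop) : Prop :=
  exists s : Xmap -> Xmap,
    (forall g, Hhat g -> Hhat (s g)) /\
    (* well defined on G = Hhat / S_fin *)
    (forall g g', Hhat g -> Hhat g' -> cong_mod S_fin g g' ->
        cong_mod A_fin (s g) (s g')) /\
    (forall g h, Hhat g -> Hhat h ->
        cong_mod A_fin (s (comp g h)) (comp (s g) (s h))) /\
    (* section of the projection Hhat/A_fin -> Hhat/S_fin *)
    (forall g, Hhat g -> cong_mod S_fin g (s g)).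

(* Main.v *)
Require Import Defs.
From Stdlib Require Import Reals List.
From Stdlib Require Import Ranalysis5 Lra Bool Permutation ProofIrrelevance Classical ClassicalEpsilon FunctionalExtensionality Arith Lia.
Import ListNotations.
Open Scope nat_scope.

Fixpoint xorl (l : list bool) : bool :=
  match l with [] => false | b :: l => xorb b (xorl l) end.

Lemma xorl_perm l l' : Permutation l l' -> xorl l = xorl l'.
Proof.
  induction 1; simpl; try congruence.
  destruct x, y, (xorl l); reflexivity.
Qed.

Lemma xorl_map_xor {A} (f g : A -> bool) l :
  xorl (map (fun z => xorb (f z) (g z)) l) = xorb (xorl (map f l)) (xorl (map g l)).
Proof.
  induction l; simpl; auto. rewrite IHl.
  destruct (f a), (g a), (xorl (map f l)), (xorl (map g l)); reflexivity.
Qed.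

Lemma xorl_map_ext_in {A} (f g : A -> bool) l :
  (forall z, In z l -> f z = g z) -> xorl (map f l) = xorl (map g l).
Proof. intros H. f_equal. apply map_ext_in. auto. Qed.

Fixpoint Qb {A} (P : A -> A -> bool) (L : list A) : bool :=
  match L with [] => false | a :: L' => xorb (xorl (map (P a) L')) (Qb P L') end.

Lemma Qb_perm {A} (P : A -> A -> bool) (Psym : forall x y, P x y = P y x) L L' :
  Permutation L L' -> Qb P L = Qb P L'.
Proof.
  induction 1; simpl.
  - reflexivity.
  - rewrite IHPermutation, (xorl_perm _ _ (Permutation_map (P x) H)). reflexivity.
  - rewrite (Psym y x).
    destruct (P x y), (xorl (map (P x) l)), (xorl (map (P y) l)), (Qb P l); reflexivity.
  - congruence.
Qed.

Lemma Qb_xor {A} (P1 P2 : A -> A -> bool) L :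
  Qb (fun x y => xorb (P1 x y) (P2 x y)) L = xorb (Qb P1 L) (Qb P2 L).
Proof.
  induction L; simpl; auto. rewrite IHL.
  rewrite (xorl_map_xor (P1 a) (P2 a)).
  destruct (xorl (map (P1 a) L)), (xorl (map (P2 a) L)), (Qb P1 L), (Qb P2 L); reflexivity.
Qed.

Lemma Qb_map {A} (h : A -> A) P L : Qb P (map h L) = Qb (fun x y => P (h x) (h y)) L.
Proof.
  induction L; simpl; auto. rewrite IHL, map_map. reflexivity.
Qed.

Lemma Qb_ext_in {A} (P P' : A -> A -> bool) L :
  (forall x y, In x L -> In y L -> P x y = P' x y) -> Qb P L = Qb P' L.
Proof.
  induction L; simpl; intros H; auto.
  rewrite IHL by (intros; apply H; right; auto).
  f_equal. f_equal. apply map_ext_in. intros; apply H; auto.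
Qed.

Section Types.
Variables (A T : Type) (eqT : forall x y : T, {x = y} + {x <> y}) (t : A -> T).

Lemma extract1 L tau : In tau (map t L) ->
  exists a L1, t a = tau /\ Permutation L (a :: L1).
Proof.
  intros Hin. apply in_map_iff in Hin as [a [Ha Hin]].
  apply in_split in Hin as [l1 [l2 ->]].
  exists a, (l1 ++ l2). split; auto. apply Permutation_sym, Permutation_middle.
Qed.

Lemma count_perm L L' tau : Permutation L L' ->
  count_occ eqT (map t L) tau = count_occ eqT (map t L') tau.
Proof. intros H. apply Permutation_count_occ. apply Permutation_map. auto. Qed.

Lemma extract4 L tau : (4 <= count_occ eqT (map t L) tau)%nat ->
  exists a b c d L0, t a = tau /\ t b = tau /\ t c = tau /\ t d = tau /\
    Permutation L (a :: b :: c :: d :: L0).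
Proof.
  intros H.
  destruct (extract1 L tau) as [a [L1 [Ha P1]]].
  { apply count_occ_In with (eq_dec := eqT). lia. }
  rewrite (count_perm _ _ _ P1) in H. simpl in H. rewrite <- Ha in H.
  destruct (eqT (t a) (t a)) as [_|n]; [|congruence]. rewrite Ha in H.
  destruct (extract1 L1 tau) as [b [L2 [Hb P2]]].
  { apply count_occ_In with (eq_dec := eqT). lia. }
  rewrite (count_perm _ _ _ P2) in H. simpl in H. rewrite <- Hb in H.
  destruct (eqT (t b) (t b)) as [_|n]; [|congruence]. rewrite Hb in H.
  destruct (extract1 L2 tau) as [c [L3 [Hc P3]]].
  { apply count_occ_In with (eq_dec := eqT). lia. }
  rewrite (count_perm _ _ _ P3) in H. simpl in H. rewrite <- Hc in H.
  destruct (eqT (t c) (t c)) as [_|n]; [|congruence]. rewrite Hc in H.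
  destruct (extract1 L3 tau) as [d [L4 [Hd P4]]].
  { apply count_occ_In with (eq_dec := eqT). lia. }
  exists a, b, c, d, L4. repeat split; auto.
  eapply perm_trans; [exact P1|]. apply perm_skip.
  eapply perm_trans; [exact P2|]. apply perm_skip.
  eapply perm_trans; [exact P3|]. apply perm_skip. exact P4.
Qed.

Variable P : A -> A -> bool.
Hypothesis Psym : forall x y, P x y = P y x.
Hypothesis Presp : forall x y x' y', x <> y -> x' <> y' -> t x = t x' -> t y = t y' -> P x y = P x' y'.

Lemma xorl_types (a a' : A) L L' :
  Permutation (map t L) (map t L') -> t a = t a' ->
  (forall z, In z L -> z <> a) -> (forall z, In z L' -> z <> a') ->
  xorl (map (P a) L) = xorl (map (P a') L').
Proof.
  revert L'; induction L as [|z L IH]; intros L' Hp Ha Hn Hn'.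
  - simpl in Hp. apply Permutation_nil in Hp. destruct L'; [reflexivity | discriminate].
  - simpl in Hp.
    assert (Hin : In (t z) (map t L')) by (eapply Permutation_in; [exact Hp| left; reflexivity]).
    apply in_map_iff in Hin as [z' [Hz' Hin']].
    apply in_split in Hin' as [l1 [l2 ->]].
    rewrite (xorl_perm (map (P a') (l1 ++ z' :: l2)) (map (P a') (z' :: l1 ++ l2))).
    2: { apply Permutation_map. apply Permutation_sym, Permutation_middle. }
    simpl. rewrite (Presp a z a' z'); auto.
    2: { intros E. apply (Hn z); [left; reflexivity | congruence]. }
    2: { intros E. apply (Hn' z'); [apply in_or_app; right; left; reflexivity | congruence]. }
    f_equal. apply IH; auto.
    + rewrite map_app in Hp. simpl in Hp. rewrite Hz' in Hp.
      rewrite map_app. eapply Permutation_cons_app_inv. exact Hp.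
    + intros; apply Hn; right; auto.
    + intros w Hw. apply Hn'. apply in_app_or in Hw as [Hw|Hw]; apply in_or_app; [left|right;right]; auto.
Qed.

Lemma Qb_types L L' : NoDup L -> NoDup L' -> Permutation (map t L) (map t L') -> Qb P L = Qb P L'.
Proof.
  revert L'; induction L as [|a L IH]; intros L' N N' Hp.
  - simpl in Hp. apply Permutation_nil in Hp. destruct L'; [reflexivity | discriminate].
  - simpl in Hp.
    assert (Hin : In (t a) (map t L')) by (eapply Permutation_in; [exact Hp| left; reflexivity]).
    apply in_map_iff in Hin as [a' [Ha' Hin']].
    apply in_split in Hin' as [l1 [l2 ->]].
    assert (Pm : Permutation (l1 ++ a' :: l2) (a' :: l1 ++ l2)) by (apply Permutation_sym, Permutation_middle).
    rewrite (Qb_perm P Psym _ _ Pm).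
    assert (N2 : NoDup (a' :: l1 ++ l2)) by (eapply Permutation_NoDup; eauto).
    inversion N; subst. inversion N2; subst.
    simpl. f_equal.
    + apply xorl_types; auto.
      * rewrite map_app in Hp. simpl in Hp. rewrite Ha' in Hp.
        rewrite map_app. eapply Permutation_cons_app_inv. exact Hp.
      * intros z Hz ->. auto.
      * intros z Hz ->. auto.
    + apply IH; auto.
      rewrite map_app in Hp. simpl in Hp. rewrite Ha' in Hp.
      rewrite map_app. eapply Permutation_cons_app_inv. exact Hp.
Qed.

Lemma Qb_remove4 a b c d L0 : NoDup (a :: b :: c :: d :: L0) ->
  t a = t b -> t a = t c -> t a = t d ->
  Qb P (a :: b :: c :: d :: L0) = Qb P L0.
Proof.
  intros N Hb Hc Hd.
  inversion N as [|? ? Na N1]; subst. inversion N1 as [|? ? Nb N2]; subst.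
  inversion N2 as [|? ? Nc N3]; subst. inversion N3 as [|? ? Nd N4]; subst.
  simpl in Na, Nb, Nc.
  assert (Eb : map (P b) L0 = map (P a) L0).
  { apply map_ext_in. intros z Hz. apply Presp; [intro E; subst; tauto|intro E; subst; tauto|congruence|congruence]. }
  assert (Ec : map (P c) L0 = map (P a) L0).
  { apply map_ext_in. intros z Hz. apply Presp; [intro E; subst; tauto|intro E; subst; tauto|congruence|congruence]. }
  assert (Ed : map (P d) L0 = map (P a) L0).
  { apply map_ext_in. intros z Hz. apply Presp; [intro E; subst; tauto|intro E; subst; tauto|congruence|congruence]. }
  assert (W1 : P a c = P a b) by (apply Presp; [intro E; subst; tauto|intro E; subst; tauto|congruence|congruence]).
  assert (W2 : P a d = P a b) by (apply Presp; [intro E; subst; tauto|intro E; subst; tauto|congruence|congruence]).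
  assert (W3 : P b c = P a b) by (apply Presp; [intro E; subst; tauto|intro E; subst; tauto|congruence|congruence]).
  assert (W4 : P b d = P a b) by (apply Presp; [intro E; subst; tauto|intro E; subst; tauto|congruence|congruence]).
  assert (W5 : P c d = P a b) by (apply Presp; [intro E; subst; tauto|intro E; subst; tauto|congruence|congruence]).
  simpl. rewrite Eb, Ec, Ed, W1, W2, W3, W4, W5.
  destruct (P a b), (xorl (map (P a) L0)), (Qb P L0); reflexivity.
Qed.

Lemma Qb_mod4 : forall n L L', (length L + length L' <= n)%nat -> NoDup L -> NoDup L' ->
  (forall tau, (count_occ eqT (map t L) tau) mod 4 = (count_occ eqT (map t L') tau) mod 4)%nat ->
  Qb P L = Qb P L'.
Proof.
  induction n; intros L L' Hn N N' Hc.
  - destruct L, L'; simpl in Hn; try lia. reflexivity.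
  - destruct (classic (exists tau, 4 <= count_occ eqT (map t L) tau)%nat) as [[tau Ht]|Hno].
    + destruct (extract4 L tau Ht) as [a [b [c [d [L0 [Ha [Hb [Hc' [Hd Hp]]]]]]]]].
      assert (N0 : NoDup (a :: b :: c :: d :: L0)) by (eapply Permutation_NoDup; eauto).
      rewrite (Qb_perm P Psym _ _ Hp), Qb_remove4; auto; try congruence.
      apply IHn.
      * apply Permutation_length in Hp. simpl in Hp. lia.
      * inversion N0; subst. inversion H2; subst. inversion H4; subst. inversion H6; subst. auto.
      * auto.
      * intros tau'. rewrite <- Hc. rewrite (count_perm _ _ tau' Hp). cbn [map count_occ].
        destruct (eqT (t a) tau'), (eqT (t b) tau'), (eqT (t c) tau'), (eqT (t d) tau'); try congruence.
        replace (S (S (S (S (count_occ eqT (map t L0) tau'))))) with (count_occ eqT (map t L0) tau' + 1 * 4)%nat by lia.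
        rewrite Nat.Div0.mod_add. reflexivity.
    + destruct (classic (exists tau, 4 <= count_occ eqT (map t L') tau)%nat) as [[tau Ht]|Hno'].
      * destruct (extract4 L' tau Ht) as [a [b [c [d [L0 [Ha [Hb [Hc' [Hd Hp]]]]]]]]].
        assert (N0 : NoDup (a :: b :: c :: d :: L0)) by (eapply Permutation_NoDup; eauto).
        rewrite (Qb_perm P Psym L' _ Hp), Qb_remove4; auto; try congruence.
        apply IHn.
        -- apply Permutation_length in Hp. simpl in Hp. lia.
        -- auto.
        -- inversion N0; subst. inversion H2; subst. inversion H4; subst. inversion H6; subst. auto.
        -- intros tau'. rewrite Hc. rewrite (count_perm _ _ tau' Hp). cbn [map count_occ].
           destruct (eqT (t a) tau'), (eqT (t b) tau'), (eqT (t c) tau'), (eqT (t d) tau'); try congruence.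
           replace (S (S (S (S (count_occ eqT (map t L0) tau'))))) with (count_occ eqT (map t L0) tau' + 1 * 4)%nat by lia.
           rewrite Nat.Div0.mod_add. reflexivity.
      * apply Qb_types; auto. apply Permutation_count_occ with (eq_dec := eqT).
        intros tau. specialize (Hc tau).
        assert (h1 : (count_occ eqT (map t L) tau < 4)%nat) by (destruct (Nat.lt_ge_cases (count_occ eqT (map t L) tau) 4); auto; exfalso; eauto).
        assert (h2 : (count_occ eqT (map t L') tau < 4)%nat) by (destruct (Nat.lt_ge_cases (count_occ eqT (map t L') tau) 4); auto; exfalso; eauto).
        rewrite !Nat.mod_small in Hc; auto.
Qed.

End Types.

Open Scope R_scope.

Lemma X_eq (x y : X) : xval x = xval y -> x = y.
Proof. destruct x as [x px], y as [y py]; simpl; intros ->. f_equal; apply proof_irrelevance. Qed.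

Definition eqX (x y : X) : {x = y} + {x <> y}.
Proof.
  destruct (Req_EM_T (xval x) (xval y)) as [h|h];
  [left; now apply X_eq | right; intros ->; now apply h].
Defined.

Lemma xval_range (x : X) : 0 <= xval x < 1.
Proof. destruct x; auto. Qed.

Definition pt0 : X := exist _ 0 (conj (Rle_refl 0) Rlt_0_1).
Lemma pt0_val : xval pt0 = 0. Proof. reflexivity. Qed.

Definition clampX (r : R) : X :=
  match Rle_dec 0 r with
  | left h1 => match Rlt_dec r 1 with left h2 => exist _ r (conj h1 h2) | right _ => pt0 end
  | right _ => pt0 end.
Lemma clampX_val r : 0 <= r < 1 -> xval (clampX r) = r.
Proof.
  intros [h1 h2]. unfold clampX. destruct (Rle_dec 0 r); [|lra]. destruct (Rlt_dec r 1); [reflexivity|lra].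
Qed.

Fixpoint prv (E : list X) (x : X) : X :=
  match E with
  | [] => pt0
  | a :: E' => if Rle_dec (xval a) (xval x)
               then (if Rlt_dec (xval (prv E' x)) (xval a) then a else prv E' x)
               else prv E' x
  end.

Lemma prv_spec E x : (prv E x = pt0 \/ In (prv E x) E) /\ xval (prv E x) <= xval x /\
  (forall a, In a E -> xval a <= xval x -> xval a <= xval (prv E x)).
Proof.
  induction E as [|b E IH]; simpl.
  - split; [left; auto|]. split; [pose proof (xval_range x); unfold xval in *; simpl; lra | intros a []].
  - destruct IH as [H1 [H2 H3]].
    destruct (Rle_dec (xval b) (xval x)); [destruct (Rlt_dec (xval (prv E x)) (xval b))|].
    + split; [right; left; auto|]. split; auto.
      intros a [->|Ha] Hax; [lra|]. specialize (H3 a Ha Hax). lra.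
    + split; [destruct H1; auto|]. split; auto.
      intros a [->|Ha] Hax; [lra|]. auto.
    + split; [destruct H1; auto|]. split; auto.
      intros a [->|Ha] Hax; [lra|]. auto.
Qed.

Lemma prv_in E x : In pt0 E -> In (prv E x) E.
Proof. intros H0. destruct (prv_spec E x) as [[->|H] _]; auto. Qed.

Lemma prv_le E x : xval (prv E x) <= xval x.
Proof. apply prv_spec. Qed.

Lemma prv_max E x a : In a E -> xval a <= xval x -> xval a <= xval (prv E x).
Proof. apply prv_spec. Qed.

Lemma prv_char E x p : In p E -> xval p <= xval x ->
  (forall a, In a E -> xval a <= xval x -> xval a <= xval p) -> prv E x = p.
Proof.
  intros Hp Hpx Hm. apply X_eq. apply Rle_antisym.
  - destruct (prv_spec E x) as [[H|H] [H2 _]].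
    + rewrite H, pt0_val. apply xval_range.
    + apply Hm; auto.
  - apply prv_max; auto.
Qed.

Lemma prv_mono E x y : In pt0 E -> xval x <= xval y -> xval (prv E x) <= xval (prv E y).
Proof.
  intros H0 Hxy. apply prv_max. apply prv_in; auto. pose proof (prv_le E x). lra.
Qed.

Lemma prv_mem E e : In e E -> prv E e = e.
Proof. intros He. apply prv_char; auto. intros; lra. Qed.

Lemma prv_ext E E' x : (forall a, In a E <-> In a E') -> In pt0 E -> prv E x = prv E' x.
Proof.
  intros Hq H0. symmetry. apply prv_char.
  - apply Hq, prv_in; auto.
  - apply prv_le.
  - intros a Ha Hax. apply prv_max; auto. apply Hq; auto.
Qed.

Definition memb (E : list X) (x : X) : bool := if in_dec eqX x E then true else false.
Definition eqXb (x y : X) : bool := if eqX x y then true else false.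
Definition gp (E : list X) (e x : X) : bool := negb (memb E x) && eqXb (prv E x) e.

Lemma memb_true E x : memb E x = true <-> In x E.
Proof. unfold memb. destruct (in_dec eqX x E); split; auto; discriminate. Qed.
Lemma memb_false E x : memb E x = false <-> ~ In x E.
Proof. unfold memb. destruct (in_dec eqX x E); split; auto; try discriminate; tauto. Qed.
Lemma eqXb_true x y : eqXb x y = true <-> x = y.
Proof. unfold eqXb. destruct (eqX x y); split; auto; discriminate. Qed.

Lemma gp_true E e x : gp E e x = true <-> ~ In x E /\ prv E x = e.
Proof.
  unfold gp. rewrite andb_true_iff, negb_true_iff, memb_false, eqXb_true. tauto.
Qed.

Lemma between_gap E x y z : In pt0 E -> ~ In x E -> ~ In y E -> prv E x = prv E y ->
  xval x <= xval z <= xval y -> ~ In z E /\ prv E z = prv E x.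
Proof.
  intros H0 Hx Hy Hxy [h1 h2]. split.
  - intros Hz. pose proof (prv_max E y z Hz h2). rewrite <- Hxy in H.
    pose proof (prv_le E x). assert (xval z = xval x) by lra.
    apply X_eq in H2. subst. auto.
  - apply X_eq. pose proof (prv_mono E x z H0 h1). pose proof (prv_mono E z y H0 h2).
    rewrite <- Hxy in H1. lra.
Qed.

Lemma gap_of_noE E x y : In pt0 E -> xval x <= xval y ->
  (forall e, In e E -> ~ (xval x <= xval e <= xval y)) -> prv E x = prv E y.
Proof.
  intros H0 Hxy Hn. apply X_eq. apply Rle_antisym.
  - apply prv_mono; auto.
  - assert (Hy := prv_in E y H0). pose proof (prv_le E y).
    assert (xval (prv E y) < xval x).
    { destruct (Rlt_dec (xval (prv E y)) (xval x)); auto. exfalso. apply (Hn _ Hy). lra. }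
    apply prv_max; auto. lra.
Qed.

Fixpoint nxt (E : list X) (e : R) : R :=
  match E with
  | [] => 1
  | a :: E' => if Rlt_dec e (xval a) then Rmin (xval a) (nxt E' e) else nxt E' e
  end.

Lemma nxt_spec E e : e < 1 -> e < nxt E e <= 1 /\ forall a, In a E -> e < xval a -> nxt E e <= xval a.
Proof.
  intros He. induction E as [|b E IH]; simpl.
  - split; [lra| tauto].
  - destruct IH as [[h1 h2] h3]. destruct (Rlt_dec e (xval b)).
    + split. { pose proof (xval_range b). unfold Rmin; destruct (Rle_dec (xval b) (nxt E e)); lra. }
      intros a [->|Ha] Hea. { apply Rmin_l. }
      specialize (h3 a Ha Hea). pose proof (Rmin_r (xval b) (nxt E e)). lra.
    + split; [lra|]. intros a [->|Ha] Hea; [lra|]. auto.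
Qed.

Lemma gap_point E e r : In pt0 E -> In e E -> xval e < r < nxt E (xval e) ->
  ~ In (clampX r) E /\ prv E (clampX r) = e /\ xval (clampX r) = r.
Proof.
  intros H0 He [h1 h2].
  pose proof (xval_range e). destruct (nxt_spec E (xval e)) as [[n1 n2] n3]; [lra|].
  assert (Hv : xval (clampX r) = r) by (apply clampX_val; lra).
  split; [|split; auto].
  - intros Hin. specialize (n3 _ Hin). rewrite Hv in n3. lra.
  - apply prv_char; auto. rewrite Hv; lra.
    intros a Ha Har. rewrite Hv in Har.
    destruct (Rlt_dec (xval e) (xval a)); [|lra]. specialize (n3 a Ha r0). lra.
Qed.

Lemma gap_nonempty E e : In pt0 E -> In e E -> exists z, ~ In z E /\ prv E z = e.
Proof.
  intros H0 He. pose proof (xval_range e). destruct (nxt_spec E (xval e)) as [[n1 n2] n3]; [lra|].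
  destruct (gap_point E e ((xval e + nxt E (xval e))/2) H0 He) as [A [B _]]; [lra|].
  eauto.
Qed.

Definition good (E S : list X) : Prop :=
  NoDup S /\ incl E S /\ forall e, In e E -> (length (filter (gp E e) S) mod 4 = 3)%nat.

Lemma filter_length_ext {A} (f g : A -> bool) l : (forall x, In x l -> f x = g x) ->
  length (filter f l) = length (filter g l).
Proof. intros H. f_equal. apply filter_ext_in. auto. Qed.

Lemma filter_length_orb {A} (f g : A -> bool) l : (forall x, In x l -> f x = true -> g x = false) ->
  length (filter (fun x => f x || g x) l) = (length (filter f l) + length (filter g l))%nat.
Proof.
  induction l as [|a l IH]; simpl; intros H; auto.
  specialize (H a (or_introl eq_refl)) as Ha.
  destruct (f a) eqn:Ef; simpl.
  - rewrite Ha by auto. simpl. rewrite IH; auto.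
  - destruct (g a); simpl; rewrite IH; auto; lia.
Qed.

Lemma good_ext E E' S : (forall a, In a E <-> In a E') -> In pt0 E -> good E S -> good E' S.
Proof.
  intros Hq H0 [N [I C]]. split; auto. split.
  - intros a Ha. apply I, Hq, Ha.
  - intros e He. replace (length (filter (gp E' e) S)) with (length (filter (gp E e) S)); [apply C, Hq, He|].
    apply filter_length_ext. intros x _.
    unfold gp. rewrite (prv_ext E E' x Hq H0).
    unfold memb. destruct (in_dec eqX x E), (in_dec eqX x E'); auto; exfalso; firstorder.
Qed.

Lemma mod4_add3 a b : (a mod 4 = 3 -> b mod 4 = 3 -> (a + 1 + b) mod 4 = 3)%nat.
Proof.
  intros Ha Hb. pose proof (Nat.div_mod_eq a 4). pose proof (Nat.div_mod_eq b 4).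
  replace (a + 1 + b)%nat with (3 + (a/4 + b/4 + 1) * 4)%nat by lia.
  rewrite Nat.Div0.mod_add. reflexivity.
Qed.

Lemma count_single (S : list X) p : NoDup S -> In p S -> length (filter (fun x => eqXb x p) S) = 1%nat.
Proof.
  intros N Hp. rewrite <- (proj1 (NoDup_count_occ' eqX S) N p Hp).
  clear N Hp. induction S as [|a S IH]; simpl; auto.
  unfold eqXb. destruct (eqX a p), (eqX p a); subst; simpl; try congruence; auto.
Qed.

Lemma good_refine1 E p S : In pt0 E -> ~ In p E -> good (p :: E) S -> good E S.
Proof.
  intros H0 Hp [N [I C]].
  assert (HpS : In p S) by (apply I; left; auto).
  split; auto. split; [intros a Ha; apply I; right; auto|].
  intros e He.
  assert (Hep : e <> p) by (intros ->; auto).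
  assert (Hprv : forall x, prv (p :: E) x = if Rle_dec (xval p) (xval x)
               then (if Rlt_dec (xval (prv E x)) (xval p) then p else prv E x) else prv E x) by reflexivity.
  destruct (eqX e (prv E p)) as [Hpe|Hpe].
  -
    assert (Heq : forall x, In x S -> gp E e x = (gp (p :: E) e x || eqXb x p) || gp (p :: E) p x).
    { intros x _. apply eq_iff_eq_true. rewrite !orb_true_iff, !gp_true, eqXb_true.
      rewrite Hprv. simpl.
      split.
      - intros [Hx Hxe].
        destruct (eqX x p) as [->|Hxp]; [left; right; auto|].
        destruct (Rle_dec (xval p) (xval x)); [destruct (Rlt_dec (xval (prv E x)) (xval p))|].
        + right. split; [intros [?|?]; auto|auto].
        + left; left. split; [intros [?|?]; auto|auto].
        + left; left. split; [intros [?|?]; auto|auto].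
      - intros [[[Hx Hxe]| ->]|[Hx Hxe]].
        + split; [tauto|]. destruct (Rle_dec (xval p) (xval x)); [destruct (Rlt_dec (xval (prv E x)) (xval p))|]; auto.
          subst e; congruence.
        + split; auto.
        + destruct (Rle_dec (xval p) (xval x)); [destruct (Rlt_dec (xval (prv E x)) (xval p))|].
          * split; [tauto|]. subst e. apply X_eq. apply Rle_antisym.
            -- apply prv_max; [apply prv_in; auto|lra].
            -- apply prv_mono; auto.
          * exfalso; apply Hp; rewrite <- Hxe; apply prv_in; auto.
          * exfalso; apply Hp; rewrite <- Hxe; apply prv_in; auto. }
    rewrite (filter_length_ext _ _ _ Heq).
    rewrite !filter_length_orb.
    + rewrite count_single; auto. apply mod4_add3; auto. apply C; right; auto. apply C; left; auto.
    + intros x _ Hx. apply not_true_iff_false. rewrite eqXb_true. rewrite gp_true in Hx.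
      intros ->. apply Hx. left; auto.
    + intros x _ Hx. apply not_true_iff_false. rewrite gp_true. rewrite orb_true_iff, gp_true, eqXb_true in Hx.
      intros [Hx1 Hx2]. destruct Hx as [[Hy1 Hy2]| ->]; [|apply Hx1; left; auto].
      rewrite Hprv in Hy2, Hx2. destruct (Rle_dec (xval p) (xval x)); [destruct (Rlt_dec (xval (prv E x)) (xval p))|]; congruence.
  - replace (length (filter (gp E e) S)) with (length (filter (gp (p :: E) e) S)); [apply C; right; auto|].
    apply filter_length_ext. intros x _. symmetry.
    apply eq_iff_eq_true. rewrite !gp_true. rewrite Hprv. simpl. split.
    + intros [Hx Hxe].
      assert (Hxp : x <> p) by (intros ->; congruence).
      destruct (Rle_dec (xval p) (xval x)); [destruct (Rlt_dec (xval (prv E x)) (xval p))|].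
      * exfalso. apply Hpe. subst e. apply X_eq. apply Rle_antisym.
        -- apply prv_max; [apply prv_in; auto|lra].
        -- apply prv_mono; auto.
      * split; [intros [?|?]; auto|auto].
      * split; [intros [?|?]; auto|auto].
    + intros [Hx Hxe]. split; [tauto|].
      destruct (Rle_dec (xval p) (xval x)); [destruct (Rlt_dec (xval (prv E x)) (xval p))|]; auto.
      congruence.
Qed.

Lemma good_refine_app D E S : In pt0 E -> good (D ++ E) S -> good E S.
Proof.
  induction D as [|a D IH]; simpl; intros H0 G; auto.
  apply IH; auto.
  destruct (in_dec eqX a (D ++ E)) as [Ha|Ha].
  - apply (good_ext (a :: D ++ E)); auto.
    + intros b; simpl; split; [intros [->|?]; auto|auto].
    + right; apply in_or_app; auto.
  - apply (good_refine1 _ a); auto. apply in_or_app; auto.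
Qed.

Lemma good_refine E E2 S : In pt0 E -> incl E E2 -> good E2 S -> good E S.
Proof.
  intros H0 Hi G. apply (good_refine_app E2); auto.
  apply (good_ext E2); auto.
  intros a; split; [intros; apply in_or_app; auto| intros Ha; apply in_app_or in Ha as [?|?]; auto].
Qed.

Definition qs (E : list X) (e : X) : list X :=
  let d := nxt E (xval e) - xval e in
  [clampX (xval e + d/4); clampX (xval e + d/2); clampX (xval e + 3*d/4)].

Lemma qs_props E e : In pt0 E -> In e E ->
  NoDup (qs E e) /\ forall z, In z (qs E e) -> ~ In z E /\ prv E z = e.
Proof.
  intros H0 He. pose proof (xval_range e). destruct (nxt_spec E (xval e)) as [[n1 n2] n3]; [lra|].
  set (d := nxt E (xval e) - xval e).
  destruct (gap_point E e (xval e + d/4) H0 He) as [A1 [B1 C1]]; [unfold d; lra|].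
  destruct (gap_point E e (xval e + d/2) H0 He) as [A2 [B2 C2]]; [unfold d; lra|].
  destruct (gap_point E e (xval e + 3*d/4) H0 He) as [A3 [B3 C3]]; [unfold d; lra|].
  unfold qs. fold d. split.
  - repeat constructor; simpl.
    + intros [h|[h|[]]]; apply (f_equal xval) in h; unfold d in *; lra.
    + intros [h|[]]; apply (f_equal xval) in h; unfold d in *; lra.
    + intros [].
  - intros z [<-|[<-|[<-|[]]]]; auto.
Qed.

Lemma count_flat E L e : In pt0 E -> NoDup L -> incl L E ->
  length (filter (gp E e) (flat_map (qs E) L)) = (if in_dec eqX e L then 3 else 0)%nat.
Proof.
  intros H0. induction L as [|a L IH]; intros N I; [simpl; auto|]. cbn [flat_map].
  inversion N; subst.
  rewrite filter_app, length_app, IH; auto; [|intros b Hb; apply I; right; auto].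
  destruct (qs_props E a H0 (I a (or_introl eq_refl))) as [_ Hq].
  assert (Hf : length (filter (gp E e) (qs E a)) = (if eqX a e then 3 else 0)%nat).
  { assert (forall z, In z (qs E a) -> gp E e z = if eqX a e then true else false).
    { intros z Hz. destruct (Hq z Hz) as [h1 h2]. apply eq_iff_eq_true. rewrite gp_true.
      destruct (eqX a e); split; intros; try tauto; try discriminate. split; auto. congruence.
      destruct H as [_ H]. congruence. }
    rewrite (filter_length_ext _ _ _ H). unfold qs. simpl. destruct (eqX a e); reflexivity. }
  rewrite Hf.
  destruct (in_dec eqX e (a :: L)) as [h|h], (eqX a e), (in_dec eqX e L); subst; simpl in h; try tauto; try reflexivity;
  destruct h; congruence.
Qed.

Lemma nodup_flat E L : In pt0 E -> NoDup L -> incl L E -> NoDup (flat_map (qs E) L).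
Proof.
  intros H0. induction L as [|a L IH]; intros N I; [constructor|]. cbn [flat_map].
  inversion N; subst.
  destruct (qs_props E a H0 (I a (or_introl eq_refl))) as [Nq Hq].
  apply NoDup_app; auto.
  - apply IH; auto. intros b Hb; apply I; right; auto.
  - intros z Hz Hz2. apply in_flat_map in Hz2 as [b [Hb Hzb]].
    destruct (qs_props E b H0 (I b (or_intror Hb))) as [_ Hq2].
    destruct (Hq z Hz) as [_ h1]. destruct (Hq2 z Hzb) as [_ h2].
    congruence.
Qed.

Lemma length_filter_false {A} (l : list A) : length (filter (fun _ => false) l) = 0%nat.
Proof. induction l; simpl; auto. Qed.

Lemma good_exists E : In pt0 E -> exists S, good E S.
Proof.
  intros H0.
  set (E' := nodup eqX E).
  assert (Hq : forall a, In a E' <-> In a E) by (intros; apply nodup_In).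
  assert (H0' : In pt0 E') by (apply Hq; auto).
  exists (E' ++ flat_map (qs E') E').
  apply (good_ext E'); [exact Hq | auto |].
  split; [|split].
  - apply NoDup_app; [apply NoDup_nodup | apply nodup_flat; auto; [apply NoDup_nodup| intros a; auto]|].
    intros z Hz Hz2. apply in_flat_map in Hz2 as [b [Hb Hzb]].
    destruct (qs_props E' b H0' Hb) as [_ Hq2]. apply (Hq2 z Hzb); auto.
  - intros a Ha; apply in_or_app; auto.
  - intros e He. rewrite filter_app, length_app.
    rewrite (count_flat E' E' e H0' (NoDup_nodup _ _) (fun a h => h)).
    assert (Hz : length (filter (gp E' e) E') = 0%nat).
    { rewrite (filter_length_ext _ (fun _ => false)); [apply length_filter_false|].
      intros x Hx. apply not_true_iff_false. rewrite gp_true. tauto. }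
    rewrite Hz. destruct (in_dec eqX e E'); [reflexivity|tauto].
Qed.

Definition valid (f : Xmap) (E : list X) : Prop := In pt0 E /\ forall x, ~ In x E -> cont_at f x.
Definition inj (f : Xmap) : Prop := forall x y, f x = f y -> x = y.

Lemma clamp_close r r' : 0 <= r < 1 -> Rabs (r' - r) < 1 - r -> Rabs (xval (clampX r') - r) <= Rabs (r' - r).
Proof.
  intros [h1 h2] H. unfold clampX.
  destruct (Rle_dec 0 r'); [destruct (Rlt_dec r' 1)|].
  - simpl. lra.
  - exfalso. apply Rabs_def2 in H. lra.
  - simpl. rewrite (Rabs_left (r' - r)) by lra. rewrite Rabs_left1 by lra. lra.
Qed.

Definition Fof (f : Xmap) (r : R) : R := xval (f (clampX r)).

Lemma Fof_cont f r (H : 0 <= r < 1) : cont_at f (clampX r) -> continuity_pt (Fof f) r.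
Proof.
  intros Hc eps Heps. destruct (Hc eps Heps) as [d [Hd Hdd]].
  exists (Rmin d (1 - r)). split; [apply Rmin_pos; lra|].
  intros r' [_ Hr']. simpl in Hr'. unfold Rdist in Hr'. simpl. unfold Rdist, Fof.
  apply Hdd. rewrite (clampX_val r) by auto.
  pose proof (Rmin_l d (1 - r)). pose proof (Rmin_r d (1 - r)).
  pose proof (clamp_close r r' H). lra.
Qed.

Lemma ivt_X f a c v : xval a <= xval c ->
  (forall z, xval a <= xval z <= xval c -> cont_at f z) ->
  (xval (f a) <= v <= xval (f c) \/ xval (f c) <= v <= xval (f a)) ->
  exists z, xval a <= xval z <= xval c /\ xval (f z) = v.
Proof.
  intros Hac Hc Hv. pose proof (xval_range a). pose proof (xval_range c).
  assert (Ea : clampX (xval a) = a) by (apply X_eq; apply clampX_val; auto).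
  assert (Ec : clampX (xval c) = c) by (apply X_eq; apply clampX_val; auto).
  assert (Hcont : forall r, xval a <= r <= xval c -> continuity_pt (Fof f) r).
  { intros r Hr. assert (0 <= r < 1) by lra. apply Fof_cont; auto. apply Hc. rewrite clampX_val; auto. }
  destruct (Req_dec v (xval (f a))) as [->|Hva]; [exists a; split; auto; lra|].
  destruct (Req_dec v (xval (f c))) as [->|Hvc]; [exists c; split; auto; lra|].
  assert (Hlt : xval a < xval c).
  { destruct Hac; auto. apply X_eq in H1. subst. lra. }
  destruct Hv as [Hv|Hv].
  - destruct (IVT_interv (fun r => Fof f r - v) (xval a) (xval c)) as [z [Hz1 Hz2]]; auto.
    + intros r Hr. apply continuity_pt_minus; auto. apply continuity_pt_const. intros ? ?; auto.
    + unfold Fof. rewrite Ea. lra.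
    + unfold Fof. rewrite Ec. lra.
    + exists (clampX z). rewrite clampX_val by lra. split; auto. unfold Fof in Hz2. lra.
  - destruct (IVT_interv (fun r => v - Fof f r) (xval a) (xval c)) as [z [Hz1 Hz2]]; auto.
    + intros r Hr. apply continuity_pt_minus; auto. apply continuity_pt_const. intros ? ?; auto.
    + unfold Fof. rewrite Ea. lra.
    + unfold Fof. rewrite Ec. lra.
    + exists (clampX z). rewrite clampX_val by lra. split; auto. unfold Fof in Hz2. lra.
Qed.

Lemma inj_val f : inj f -> forall x y, x <> y -> xval (f x) <> xval (f y).
Proof. intros Hi x y Hxy h. apply Hxy, Hi, X_eq, h. Qed.

Lemma neq_val (x y : X) : x <> y -> xval x <> xval y.
Proof. intros H h. apply H, X_eq, h. Qed.

Section Gap.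
Variables (f : Xmap) (E : list X).
Hypothesis (Hv : valid f E) (Hi : inj f).

Definition ingap (e x : X) : Prop := ~ In x E /\ prv E x = e.

Lemma gap_cont e a c : ingap e a -> ingap e c -> forall z, xval a <= xval z <= xval c -> cont_at f z.
Proof.
  intros [Ha Hae] [Hc Hce] z Hz. apply (proj2 Hv).
  destruct (between_gap E a c z (proj1 Hv) Ha Hc ltac:(congruence) Hz); auto.
Qed.

Lemma gap_between e a c z : ingap e a -> ingap e c -> xval a <= xval z <= xval c -> ingap e z.
Proof.
  intros [Ha Hae] [Hc Hce] Hz.
  destruct (between_gap E a c z (proj1 Hv) Ha Hc ltac:(congruence) Hz). split; congruence.
Qed.

Lemma three_between e a b c : ingap e a -> ingap e b -> ingap e c ->
  xval a < xval b < xval c ->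
  (xval (f a) < xval (f b) < xval (f c)) \/ (xval (f c) < xval (f b) < xval (f a)).
Proof.
  intros Ga Gb Gc [h1 h2].
  assert (nab : a <> b) by (intros ->; lra). assert (nbc : b <> c) by (intros ->; lra).
  assert (nac : a <> c) by (intros ->; lra).
  pose proof (inj_val f Hi a b nab). pose proof (inj_val f Hi b c nbc). pose proof (inj_val f Hi a c nac).
  destruct (Rlt_dec (xval (f a)) (xval (f b))), (Rlt_dec (xval (f b)) (xval (f c))); try (left; lra); try (right; lra); exfalso.
  -
    set (v := (Rmax (xval (f a)) (xval (f c)) + xval (f b)) / 2).
    pose proof (Rmax_l (xval (f a)) (xval (f c))). pose proof (Rmax_r (xval (f a)) (xval (f c))).
    assert (Hmb : Rmax (xval (f a)) (xval (f c)) < xval (f b)) by (unfold Rmax; destruct (Rle_dec (xval (f a)) (xval (f c))); lra).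
    destruct (ivt_X f a b v ltac:(lra) (gap_cont e a b Ga Gb)) as [p [Hp1 Hp2]]; [left; unfold v; lra|].
    destruct (ivt_X f b c v ltac:(lra) (gap_cont e b c Gb Gc)) as [q [Hq1 Hq2]]; [right; unfold v; lra|].
    assert (p = q) by (apply Hi, X_eq; congruence). subst q.
    assert (Epb : xval p = xval b) by lra. apply X_eq in Epb. subst p. unfold v in Hp2. lra.
  -
    set (v := (Rmin (xval (f a)) (xval (f c)) + xval (f b)) / 2).
    pose proof (Rmin_l (xval (f a)) (xval (f c))). pose proof (Rmin_r (xval (f a)) (xval (f c))).
    assert (Hmb : xval (f b) < Rmin (xval (f a)) (xval (f c))) by (unfold Rmin; destruct (Rle_dec (xval (f a)) (xval (f c))); lra).
    destruct (ivt_X f a b v ltac:(lra) (gap_cont e a b Ga Gb)) as [p [Hp1 Hp2]]; [right; unfold v; lra|].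
    destruct (ivt_X f b c v ltac:(lra) (gap_cont e b c Gb Gc)) as [q [Hq1 Hq2]]; [left; unfold v; lra|].
    assert (p = q) by (apply Hi, X_eq; congruence). subst q.
    assert (Epb : xval p = xval b) by lra. apply X_eq in Epb. subst p. unfold v in Hp2. lra.
Qed.

Lemma nested e a b a' b' : ingap e a -> ingap e b -> ingap e a' -> ingap e b' ->
  xval a <= xval a' -> xval a' < xval b' -> xval b' <= xval b ->
  (xval (f a) < xval (f b) <-> xval (f a') < xval (f b')).
Proof.
  intros Ga Gb Ga' Gb' h1 h2 h3.
  assert (S1 : xval (f a) < xval (f b) <-> xval (f a) < xval (f b')).
  { destruct h3 as [h3|h3]; [|apply X_eq in h3; subst; tauto].
    destruct h1 as [h1|h1].
    - destruct (three_between e a b' b Ga Gb' Gb ltac:(lra)); split; intros; lra.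
    - apply X_eq in h1; subst a'. destruct (three_between e a b' b Ga Gb' Gb ltac:(lra)); split; intros; lra. }
  rewrite S1.
  destruct h1 as [h1|h1]; [|apply X_eq in h1; subst; tauto].
  destruct (three_between e a a' b' Ga Ga' Gb' ltac:(lra)); split; intros; lra.
Qed.

Lemma mono_gap e x y x' y' : ingap e x -> ingap e y -> ingap e x' -> ingap e y' ->
  xval x < xval y -> xval x' < xval y' ->
  (xval (f x) < xval (f y) <-> xval (f x') < xval (f y')).
Proof.
  intros Gx Gy Gx' Gy' h1 h2.
  set (m := if Rle_dec (xval x) (xval x') then x else x').
  set (M := if Rle_dec (xval y) (xval y') then y' else y).
  assert (Gm : ingap e m) by (unfold m; destruct (Rle_dec (xval x) (xval x')); auto).
  assert (GM : ingap e M) by (unfold M; destruct (Rle_dec (xval y) (xval y')); auto).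
  assert (hm1 : xval m <= xval x) by (unfold m; destruct (Rle_dec (xval x) (xval x')); lra).
  assert (hm2 : xval m <= xval x') by (unfold m; destruct (Rle_dec (xval x) (xval x')); lra).
  assert (hM1 : xval y <= xval M) by (unfold M; destruct (Rle_dec (xval y) (xval y')); lra).
  assert (hM2 : xval y' <= xval M) by (unfold M; destruct (Rle_dec (xval y) (xval y')); lra).
  rewrite <- (nested e m M x y Gm GM Gx Gy); auto.
  rewrite <- (nested e m M x' y' Gm GM Gx' Gy'); auto. tauto.
Qed.

End Gap.

Definition Rltb (a b : R) : bool := if Rlt_dec a b then true else false.
Definition inv (f : Xmap) (x y : X) : bool :=
  xorb (Rltb (xval x) (xval y)) (Rltb (xval (f x)) (xval (f y))).

Lemma Rltb_neg a b : a <> b -> Rltb b a = negb (Rltb a b).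
Proof. intros H. unfold Rltb. destruct (Rlt_dec b a), (Rlt_dec a b); simpl; auto; lra. Qed.

Lemma inv_sym f : inj f -> forall x y, inv f x y = inv f y x.
Proof.
  intros Hi x y. destruct (eqX x y) as [->|n]; auto.
  unfold inv. rewrite (Rltb_neg (xval x) (xval y)) by (apply neq_val; auto).
  rewrite (Rltb_neg (xval (f x)) (xval (f y))) by (apply inj_val; auto).
  destruct (Rltb (xval x) (xval y)), (Rltb (xval (f x)) (xval (f y))); reflexivity.
Qed.

Lemma inv_lt f x y : xval x < xval y -> inv f x y = negb (Rltb (xval (f x)) (xval (f y))).
Proof. intros H. unfold inv, Rltb at 1. destruct (Rlt_dec (xval x) (xval y)); [reflexivity|lra]. Qed.

Section Resp.
Variables (f : Xmap) (E : list X).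
Hypothesis (Hv : valid f E) (Hi : inj f).

Lemma lemmaB e x y x' y' : ingap E e x -> ingap E e y -> ingap E e x' -> ingap E e y' ->
  x <> y -> x' <> y' -> inv f x y = inv f x' y'.
Proof.
  intros Gx Gy Gx' Gy' n n'.
  assert (K : forall a b, ingap E e a -> ingap E e b -> xval a < xval b -> inv f a b = inv f x' y').
  { intros a b Ga Gb hab. rewrite inv_lt by auto.
    destruct (Rlt_dec (xval x') (xval y')) as [h|h].
    - rewrite inv_lt by auto. unfold Rltb.
      pose proof (mono_gap f E Hv Hi e a b x' y' Ga Gb Gx' Gy' hab h).
      destruct (Rlt_dec (xval (f a)) (xval (f b))), (Rlt_dec (xval (f x')) (xval (f y'))); tauto.
    - assert (h' : xval y' < xval x') by (pose proof (neq_val _ _ n'); lra).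
      rewrite (inv_sym f Hi x' y'), inv_lt by auto. unfold Rltb.
      pose proof (mono_gap f E Hv Hi e a b y' x' Ga Gb Gy' Gx' hab h').
      destruct (Rlt_dec (xval (f a)) (xval (f b))), (Rlt_dec (xval (f y')) (xval (f x'))); tauto. }
  destruct (Rlt_dec (xval x) (xval y)) as [h|h]; [apply K; auto|].
  assert (h' : xval y < xval x) by (pose proof (neq_val _ _ n); lra).
  rewrite inv_sym by auto. apply K; auto.
Qed.

Lemma lemmaA e x x' y : ingap E e x -> ingap E e x' -> ~ ingap E e y -> inv f x y = inv f x' y.
Proof.
  intros Gx Gx' Gy.
  assert (nxy : x <> y) by (intros ->; auto). assert (nxy' : x' <> y) by (intros ->; auto).
  assert (K : forall x x', ingap E e x -> ingap E e x' -> x <> y -> x' <> y -> xval x <= xval x' -> inv f x y = inv f x' y).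
  { clear x x' Gx Gx' nxy nxy'. intros x x' Gx Gx' nxy nxy' Hle.
  assert (Ny : ~ (xval x <= xval y <= xval x')).
  { intros Hb. apply Gy. apply (gap_between f E Hv e x x' y Gx Gx' Hb). }
  assert (Nfy : ~ (xval (f x) <= xval (f y) <= xval (f x') \/ xval (f x') <= xval (f y) <= xval (f x))).
  { intros Hb. destruct (ivt_X f x x' (xval (f y)) Hle (gap_cont f E Hv e x x' Gx Gx') Hb) as [z [Hz1 Hz2]].
    assert (z = y) by (apply Hi, X_eq; auto). subst z. auto. }
  pose proof (neq_val _ _ nxy). pose proof (neq_val _ _ nxy').
  pose proof (inj_val f Hi _ _ nxy). pose proof (inj_val f Hi _ _ nxy').
  unfold inv, Rltb.
  destruct (Rlt_dec (xval x) (xval y)), (Rlt_dec (xval x') (xval y)),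
    (Rlt_dec (xval (f x)) (xval (f y))), (Rlt_dec (xval (f x')) (xval (f y))); try reflexivity;
  exfalso; try (apply Ny; lra); apply Nfy; lra. }
  destruct (Rle_dec (xval x) (xval x')); [apply K; auto|].
  symmetry; apply K; auto; lra.
Qed.

Definition eqT (a b : X * bool) : {a = b} + {a <> b}.
Proof. decide equality. apply bool_dec. apply eqX. Defined.

Definition tp (x : X) : X * bool := if memb E x then (x, false) else (prv E x, true).

Lemma tp_same x x' : tp x = tp x' -> x = x' \/ (ingap E (prv E x) x /\ ingap E (prv E x) x').
Proof.
  unfold tp, ingap. destruct (memb E x) eqn:E1, (memb E x') eqn:E2; intros H; inversion H; auto.
  right. rewrite memb_false in E1, E2. auto.
Qed.

Lemma resp x y x' y' : x <> y -> x' <> y' -> tp x = tp x' -> tp y = tp y' -> inv f x y = inv f x' y'.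
Proof.
  intros n n' Tx Ty.
  destruct (classic (ingap E (prv E x) x /\ ingap E (prv E x) y)) as [[Gx Gy]|Hn].
  - set (e := prv E x) in *.
    destruct (tp_same x x' Tx) as [<-|[_ Gx']]; destruct (tp_same y y' Ty) as [<-|[Gy2 Gy']].
    all: try reflexivity.
    all: apply (lemmaB e); auto.
    all: destruct Gy as [Ny Ey]; rewrite Ey in Gy'; auto.
  - assert (S1 : inv f x y = inv f x' y).
    { destruct (tp_same x x' Tx) as [<-|[Gx Gx']]; auto.
      apply (lemmaA (prv E x)); auto; try (intros Gy; apply Hn; split; auto). }
    rewrite S1, (inv_sym f Hi x' y), (inv_sym f Hi x' y').
    destruct (tp_same y y' Ty) as [<-|[Gy Gy']]; auto.
    apply (lemmaA (prv E y)); auto. intros Gx'.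
    destruct (tp_same x x' Tx) as [<-|[Gx Gx'']].
    + apply Hn. destruct Gx' as [h1 h2]. destruct Gy as [h3 h4]. split; split; auto; congruence.
    + apply Hn. destruct Gx'' as [h1 h2]. destruct Gx' as [h5 h6]. destruct Gy as [h3 h4].
      destruct Gx as [h7 h8]. split; split; auto; congruence.
Qed.

Lemma count_occ_map_filter {A T} (eqd : forall a b : T, {a = b} + {a <> b}) (t : A -> T) L tau :
  count_occ eqd (map t L) tau = length (filter (fun x => if eqd (t x) tau then true else false) L).
Proof. induction L; simpl; auto. destruct (eqd (t a) tau); simpl; auto. Qed.

Lemma count_tp S tau : good E S ->
  (count_occ eqT (map tp S) tau mod 4 =
     match tau with
     | (e, true) => if in_dec eqX e E then 3 else 0
     | (y, false) => if in_dec eqX y E then 1 else 0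
     end)%nat.
Proof.
  intros [N [I C]]. rewrite count_occ_map_filter. destruct tau as [y [|]].
  - destruct (in_dec eqX y E) as [Hy|Hy].
    + replace (length (filter (fun x => if eqT (tp x) (y, true) then true else false) S))
        with (length (filter (gp E y) S)); [apply C; auto|].
      apply filter_length_ext. intros x _.
      apply eq_iff_eq_true. rewrite gp_true. unfold tp.
      destruct (memb E x) eqn:Em; destruct (eqT _ _) as [h|h]; split; intros H; try discriminate; try (inversion h; fail).
      all: first [ rewrite memb_true in Em; tauto | inversion h; rewrite memb_false in Em; auto
                 | exfalso; apply h; destruct H; subst; reflexivity ].
    + rewrite (filter_length_ext _ (fun _ => false)); [rewrite length_filter_false; reflexivity|].
      intros x _. unfold tp. destruct (memb E x); destruct (eqT _ _) as [h|h]; auto; inversion h.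
      subst. exfalso. apply Hy. apply prv_in, Hv.
  - destruct (in_dec eqX y E) as [Hy|Hy].
    + rewrite (filter_length_ext _ (fun x => eqXb x y)); [rewrite count_single; auto|].
      intros x _. unfold tp, eqXb. destruct (memb E x) eqn:Em; destruct (eqT _ _) as [h|h]; destruct (eqX x y); auto; try (inversion h; fail).
      all: first [ inversion h; congruence | subst; exfalso; apply h; reflexivity
                 | subst; rewrite memb_false in Em; tauto ].
    + rewrite (filter_length_ext _ (fun _ => false)); [rewrite length_filter_false; reflexivity|].
      intros x _. unfold tp. destruct (memb E x) eqn:Em; destruct (eqT _ _) as [h|h]; auto; inversion h.
      subst. rewrite memb_true in Em. tauto.
Qed.

Lemma good_parity S S' : good E S -> good E S' -> Qb (inv f) S = Qb (inv f) S'.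
Proof.
  intros G G'.
  apply (Qb_mod4 X (X * bool) eqT tp (inv f) (inv_sym f Hi) resp (length S + length S')); auto.
  - apply G. - apply G'.
  - intros tau. rewrite (count_tp S tau G), (count_tp S' tau G'). reflexivity.
Qed.

End Resp.

Definition eps (f : Xmap) : bool :=
  match excluded_middle_informative (exists ES : list X * list X, valid f (fst ES) /\ good (fst ES) (snd ES)) with
  | left H => Qb (inv f) (snd (proj1_sig (constructive_indefinite_description _ H)))
  | right _ => false
  end.

Lemma eps_good f E S : inj f -> valid f E -> good E S -> eps f = Qb (inv f) S.
Proof.
  intros Hi Hv G. unfold eps. destruct (excluded_middle_informative _) as [H|H]; [|exfalso; apply H; exists (E,S); auto].
  destruct (constructive_indefinite_description _ H) as [[E0 S0] [Hv0 G0]]. simpl in *.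
  assert (Hv3 : valid f (E0 ++ E)).
  { split. apply in_or_app; left; apply Hv0. intros x Hx. apply Hv0. intro; apply Hx; apply in_or_app; auto. }
  destruct (good_exists (E0 ++ E) (proj1 Hv3)) as [S3 G3].
  transitivity (Qb (inv f) S3).
  - apply (good_parity f E0 Hv0 Hi); auto. apply (good_refine E0 (E0 ++ E)); auto. apply Hv0.
    intros a Ha; apply in_or_app; auto.
  - symmetry. apply (good_parity f E Hv Hi); auto. apply (good_refine E (E0++E)); auto. apply Hv.
    intros a Ha; apply in_or_app; auto.
Qed.

Lemma transport_gap h E x y : valid h E -> inj h -> In pt0 (map h E) -> ~ In x E -> ~ In y E -> prv E x = prv E y ->
  prv (map h E) (h x) = prv (map h E) (h y).
Proof.
  intros Hv Hi H0' Hx Hy Hxy.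
  assert (K : forall a b, ingap E (prv E x) a -> ingap E (prv E x) b -> xval a <= xval b ->
            forall e0, In e0 E -> ~ (xval (h a) <= xval (h e0) <= xval (h b) \/ xval (h b) <= xval (h e0) <= xval (h a))).
  { intros a b Ga Gb Hab e0 He0 Hb.
    destruct (ivt_X h a b (xval (h e0)) Hab (gap_cont h E Hv (prv E x) a b Ga Gb) Hb) as [z [Hz1 Hz2]].
    assert (z = e0) by (apply Hi, X_eq; auto). subst z.
    destruct (gap_between h E Hv (prv E x) a b e0 Ga Gb Hz1) as [Hn _]. auto. }
  assert (Gx : ingap E (prv E x) x) by (split; auto).
  assert (Gy : ingap E (prv E x) y) by (split; auto).
  assert (K2 : forall c, In c (map h E) -> ~ (xval (h x) <= xval c <= xval (h y) \/ xval (h y) <= xval c <= xval (h x))).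
  { intros c Hc. apply in_map_iff in Hc as [e0 [<- He0]].
    destruct (Rle_dec (xval x) (xval y)).
    - apply (K x y); auto.
    - intros Hb. apply (K y x Gy Gx ltac:(lra) e0 He0). tauto. }
  destruct (Rle_dec (xval (h x)) (xval (h y))).
  - apply gap_of_noE; auto. intros c Hc Hb. apply (K2 c Hc). auto.
  - symmetry. apply gap_of_noE; auto. lra. intros c Hc Hb. apply (K2 c Hc). auto.
Qed.

Lemma inv_inj1 h hi : is_inverse h hi -> inj h.
Proof. intros [H1 H2] x y E. rewrite <- (H1 x), <- (H1 y), E. reflexivity. Qed.
Lemma inv_inj2 h hi : is_inverse h hi -> inj hi.
Proof. intros [H1 H2] x y E. rewrite <- (H2 x), <- (H2 y), E. reflexivity. Qed.

Lemma length_filter_map {A B} (p : B -> bool) (h : A -> B) l :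
  length (filter p (map h l)) = length (filter (fun x => p (h x)) l).
Proof. induction l; simpl; auto. destruct (p (h a)); simpl; auto. Qed.

Lemma in_map_inj h E x : inj h -> (In (h x) (map h E) <-> In x E).
Proof.
  intros Hi. split; [|apply in_map]. intros H. apply in_map_iff in H as [y [Hy Hin]].
  apply Hi in Hy. subst; auto.
Qed.

Lemma good_transport h hi E S : is_inverse h hi -> valid h E -> valid hi (map h E) -> good E S ->
  good (map h E) (map h S).
Proof.
  intros Hinv Hv Hv' [N [I C]].
  pose proof (inv_inj1 h hi Hinv) as Hi. pose proof (inv_inj2 h hi Hinv) as Hi'.
  destruct Hinv as [Hh1 Hh2].
  assert (H0 : In pt0 E) by apply Hv. assert (H0' : In pt0 (map h E)) by apply Hv'.
  split; [|split].
  - apply FinFun.Injective_map_NoDup; auto.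
  - intros a Ha. apply in_map_iff in Ha as [e [<- He]]. apply in_map, I, He.
  - intros c Hc.
    destruct (gap_nonempty (map h E) c H0' Hc) as [z [Hz Hzc]].
    set (x0 := hi z). assert (Ex0 : h x0 = z) by apply Hh2.
    assert (Hx0 : ~ In x0 E) by (intros H; apply Hz; rewrite <- Ex0; apply in_map, H).
    set (e := prv E x0).
    assert (Hq : forall x, gp (map h E) c (h x) = gp E e x).
    { intros x. apply eq_iff_eq_true. rewrite !gp_true, (in_map_inj h E x Hi). split.
      - intros [Hx Hxc]. split; auto.
        assert (H00 : In pt0 (map hi (map h E))).
        { apply in_map_iff. exists (h pt0). split; auto. apply in_map; auto. }
        pose proof (transport_gap hi (map h E) (h x) (h x0) Hv' Hi' H00) as T.
        rewrite !Hh1 in T.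
        assert (Hs : forall a, In a (map hi (map h E)) <-> In a E).
        { intros a. rewrite map_map. split.
          - intros Ha. apply in_map_iff in Ha as [b [<- Hb]]. rewrite Hh1; auto.
          - intros Ha. apply in_map_iff. exists a. auto. }
        unfold e. rewrite (prv_ext E (map hi (map h E))) by (auto; intros; symmetry; apply Hs).
        rewrite (prv_ext E (map hi (map h E)) x0) by (auto; intros; symmetry; apply Hs).
        apply T.
        + rewrite in_map_inj; auto.
        + rewrite Ex0. auto.
        + rewrite Ex0, Hzc. auto.
      - intros [Hx Hxe]. split; auto. rewrite <- Hzc, <- Ex0.
        apply transport_gap; auto. }
    rewrite length_filter_map.
    rewrite (filter_length_ext _ (gp E e)) by (intros; apply Hq).
    apply C. unfold e. apply prv_in; auto.
Qed.

Definition PCf (f : Xmap) : Prop := exists F : list X, forall x, ~ In x F -> cont_at f x.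

Lemma cont_comp g h x : cont_at h x -> cont_at g (h x) -> cont_at (Defs.comp g h) x.
Proof.
  intros Hh Hg eps0 He. destruct (Hg eps0 He) as [d1 [Hd1 H1]].
  destruct (Hh d1 Hd1) as [d2 [Hd2 H2]]. exists d2. split; auto.
  intros y Hy. unfold Defs.comp. apply H1, H2, Hy.
Qed.

Lemma inv_cocycle g h x y : inv (Defs.comp g h) x y = xorb (inv h x y) (inv g (h x) (h y)).
Proof.
  unfold inv, Defs.comp.
  destruct (Rltb (xval x) (xval y)), (Rltb (xval (h x)) (xval (h y))), (Rltb (xval (g (h x))) (xval (g (h y)))); reflexivity.
Qed.

Lemma eps_comp g h hi : inj g -> is_inverse h hi -> PCf g -> PCf h -> PCf hi ->
  eps (Defs.comp g h) = xorb (eps g) (eps h).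
Proof.
  intros Hig Hinv [Eg Hg] [Eh Hh] [Ehi Hhi].
  pose proof (inv_inj1 h hi Hinv) as Hih. pose proof Hinv as [Hh1 Hh2].
  set (E' := pt0 :: hi pt0 :: Eh ++ map hi Eg ++ map hi Ehi).
  assert (Hnot : forall x, ~ In x E' -> ~ In x Eh /\ ~ In (h x) Eg /\ ~ In (h x) Ehi).
  { intros x Hx. repeat split; intros H; apply Hx; unfold E'; right; right; rewrite !in_app_iff; auto.
    - right; left. rewrite <- (Hh1 x). apply in_map; auto.
    - right; right. rewrite <- (Hh1 x). apply in_map; auto. }
  assert (Vh : valid h E') by (split; [left; auto| intros x Hx; apply Hh, Hnot, Hx]).
  assert (Vgh : valid (Defs.comp g h) E').
  { split; [left; auto|]. intros x Hx. destruct (Hnot x Hx) as [A [B _]]. apply cont_comp; auto. }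
  assert (Hnot' : forall y, ~ In y (map h E') -> ~ In y Eg /\ ~ In y Ehi).
  { intros y Hy. split; intros H; apply Hy; rewrite <- (Hh2 y); apply in_map; unfold E'; right; right;
    rewrite !in_app_iff; right; [left|right]; apply in_map; auto. }
  assert (P0 : In pt0 (map h E')).
  { rewrite <- (Hh2 pt0). apply in_map. right; left; auto. }
  assert (Vg : valid g (map h E')) by (split; auto; intros y Hy; apply Hg, Hnot', Hy).
  assert (Vhi : valid hi (map h E')) by (split; auto; intros y Hy; apply Hhi, Hnot', Hy).
  destruct (good_exists E' (proj1 Vh)) as [S G].
  assert (Igh : inj (Defs.comp g h)) by (intros x y E; apply Hih, Hig, E).
  rewrite (eps_good (Defs.comp g h) E' S Igh Vgh G), (eps_good h E' S Hih Vh G),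
    (eps_good g (map h E') (map h S) Hig Vg (good_transport h hi E' S Hinv Vh Vhi G)).
  rewrite (Qb_ext_in _ (fun x y => xorb (inv h x y) (inv g (h x) (h y)))) by (intros; apply inv_cocycle).
  rewrite Qb_xor, Qb_map. apply xorb_comm.
Qed.

Lemma swap_a a b : swap a b a = b.
Proof. unfold swap. destruct (Req_EM_T (xval a) (xval a)); [reflexivity|congruence]. Qed.
Lemma swap_b a b : swap a b b = a.
Proof.
  unfold swap. destruct (Req_EM_T (xval b) (xval a)) as [h|h]; [apply X_eq in h; subst; reflexivity|].
  destruct (Req_EM_T (xval b) (xval b)); [reflexivity|congruence].
Qed.
Lemma swap_other a b z : z <> a -> z <> b -> swap a b z = z.
Proof.
  intros ha hb. unfold swap.
  destruct (Req_EM_T (xval z) (xval a)) as [h|h]; [apply X_eq in h; congruence|].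
  destruct (Req_EM_T (xval z) (xval b)) as [h'|h']; [apply X_eq in h'; congruence|reflexivity].
Qed.
Lemma swap_invol a b x : swap a b (swap a b x) = x.
Proof.
  destruct (eqX x a) as [->|na]; [rewrite swap_a, swap_b; reflexivity|].
  destruct (eqX x b) as [->|nb]; [rewrite swap_b, swap_a; reflexivity|].
  rewrite (swap_other a b x) by auto; rewrite (swap_other a b x) by auto; reflexivity.
Qed.
Lemma swap_inverse a b : is_inverse (swap a b) (swap a b).
Proof. split; intros; apply swap_invol. Qed.
Lemma swap_inj a b : inj (swap a b).
Proof. apply (inv_inj1 _ _ (swap_inverse a b)). Qed.

Lemma away_from (x : X) l : ~ In x l -> exists d, 0 < d /\ forall a, In a l -> d <= Rabs (xval a - xval x).
Proof.
  induction l as [|a l IH]; intros Hx.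
  - exists 1. split; [lra| intros a []].
  - destruct IH as [d [Hd H]]; [intros h; apply Hx; right; auto|].
    assert (na : xval a <> xval x) by (intros h; apply Hx; left; apply X_eq; auto).
    exists (Rmin d (Rabs (xval a - xval x))). split.
    + apply Rmin_pos; auto. apply Rabs_pos_lt. lra.
    + intros b [<-|Hb]; [apply Rmin_r|]. pose proof (H b Hb). pose proof (Rmin_l d (Rabs (xval a - xval x))). lra.
Qed.

Lemma fin_cont f l : (forall x, f x <> x -> In x l) -> forall x, ~ In x l -> cont_at f x.
Proof.
  intros Hs x Hx e He.
  destruct (away_from x l Hx) as [d [Hd H]].
  exists (Rmin d e). split; [apply Rmin_pos; auto|].
  intros y Hy.
  assert (fx : f x = x) by (destruct (eqX (f x) x); auto; exfalso; apply Hx, Hs; auto).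
  assert (fy : f y = y).
  { destruct (eqX (f y) y) as [h|h]; auto. exfalso. pose proof (H y (Hs y h)).
    pose proof (Rmin_l d e). lra. }
  rewrite fx, fy. pose proof (Rmin_r d e). lra.
Qed.

Lemma fin_PC f l : (forall x, f x <> x -> In x l) -> PCf f.
Proof. intros Hs. exists l. apply fin_cont; auto. Qed.

Lemma swap_supp a b x : swap a b x <> x -> In x [a; b].
Proof.
  intros H. destruct (eqX x a) as [->|na]; [left; auto|].
  destruct (eqX x b) as [->|nb]; [right; left; auto|].
  exfalso. apply H, swap_other; auto.
Qed.

Lemma swap_PC a b : PCf (swap a b).
Proof. apply (fin_PC _ [a;b]), swap_supp. Qed.

Lemma Qb_false {A} (P : A -> A -> bool) L : (forall x y, In x L -> In y L -> P x y = false) -> Qb P L = false.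
Proof.
  induction L as [|a L IH]; simpl; intros H; auto.
  rewrite IH by (intros; apply H; right; auto).
  assert (xorl (map (P a) L) = false).
  { clear IH. assert (forall y, In y L -> P a y = false) by (intros; apply H; [left|right]; auto).
    clear H. induction L; simpl; auto. rewrite H0 by (left; auto). rewrite IHL; auto.
    intros; apply H0; right; auto. }
  rewrite H0. reflexivity.
Qed.

Lemma Qb_swap a b S : a <> b -> NoDup S -> In a S -> In b S -> Qb (inv (swap a b)) S = true.
Proof.
  intros nab N Ha Hb.
  apply in_split in Ha as [l1 [l2 ->]].
  assert (P1 : Permutation (l1 ++ a :: l2) (a :: l1 ++ l2)) by (apply Permutation_sym, Permutation_middle).
  assert (Hb' : In b (l1 ++ l2)).
  { apply in_app_or in Hb as [h|[h|h]]; [apply in_or_app; auto|congruence|apply in_or_app; auto]. }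
  apply in_split in Hb' as [m1 [m2 Em]].
  assert (P2 : Permutation (l1 ++ a :: l2) (a :: b :: m1 ++ m2)).
  { eapply perm_trans; [exact P1|]. apply perm_skip. rewrite Em. apply Permutation_sym, Permutation_middle. }
  rewrite (Qb_perm _ (inv_sym _ (swap_inj a b)) _ _ P2).
  assert (N2 : NoDup (a :: b :: m1 ++ m2)) by (eapply Permutation_NoDup; eauto).
  inversion N2 as [|? ? Na N3]; subst. inversion N3 as [|? ? Nb N4]; subst.
  cbn [Qb map xorl].
  assert (Hab : inv (swap a b) a b = true).
  { unfold inv, Rltb. rewrite swap_a, swap_b. pose proof (neq_val _ _ nab).
    destruct (Rlt_dec (xval a) (xval b)), (Rlt_dec (xval b) (xval a)); try reflexivity; lra. }
  assert (Hm : map (inv (swap a b) b) (m1 ++ m2) = map (inv (swap a b) a) (m1 ++ m2)).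
  { apply map_ext_in. intros z Hz.
    assert (za : z <> a) by (intros ->; apply Na; right; auto).
    assert (zb : z <> b) by (intros ->; auto).
    unfold inv. rewrite swap_a, swap_b, swap_other by auto.
    destruct (Rltb (xval a) (xval z)), (Rltb (xval b) (xval z)); reflexivity. }
  rewrite Hm, Hab, Qb_false.
  - destruct (xorl (map (inv (swap a b) a) (m1 ++ m2))); reflexivity.
  - intros x y Hx Hy. unfold inv.
    assert (xa : x <> a) by (intros ->; apply Na; right; auto).
    assert (xb : x <> b) by (intros ->; auto).
    assert (ya : y <> a) by (intros ->; apply Na; right; auto).
    assert (yb : y <> b) by (intros ->; auto).
    rewrite (swap_other a b x), (swap_other a b y) by auto.
    apply xorb_nilpotent.
Qed.

Definition ph : X := clampX (1/2).
Lemma pt0_ph : pt0 <> ph.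
Proof. intros h. apply (f_equal xval) in h. unfold ph in h. rewrite clampX_val in h by lra. simpl in h. lra. Qed.

Lemma eps_swap a b : a <> b -> eps (swap a b) = true.
Proof.
  intros nab.
  assert (V : valid (swap a b) [pt0; a; b]).
  { split; [left; auto|]. intros x Hx. apply (fin_cont _ [a;b]); [apply swap_supp|].
    intros h; apply Hx; right; auto. }
  destruct (good_exists _ (proj1 V)) as [S G].
  rewrite (eps_good _ _ S (swap_inj a b) V G).
  destruct G as [N [I _]]. apply Qb_swap; auto; apply I; simpl; auto.
Qed.

Definition foldsw (L : list (X * X)) (x : X) : X := fold_right (fun p y => swap (fst p) (snd p) y) x L.

Lemma foldsw_app L1 L2 x : foldsw (L1 ++ L2) x = foldsw L1 (foldsw L2 x).
Proof. unfold foldsw. apply fold_right_app. Qed.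

Lemma foldsw_inverse L : is_inverse (foldsw L) (foldsw (rev L)).
Proof.
  induction L as [|[a b] L [IH1 IH2]]; [split; intros; reflexivity|].
  split; intros x; simpl rev; rewrite foldsw_app; simpl.
  - rewrite swap_invol. apply IH1.
  - rewrite IH2. apply swap_invol.
Qed.

Lemma foldsw_supp L x : foldsw L x <> x -> In x (flat_map (fun p => [fst p; snd p]) L).
Proof.
  induction L as [|[a b] L IH]; intros H; [simpl in H; congruence|].
  change (foldsw ((a,b)::L) x) with (swap a b (foldsw L x)) in H.
  simpl flat_map.
  destruct (eqX (foldsw L x) x) as [E|E].
  - rewrite E in H. apply swap_supp in H. simpl in H. simpl. tauto.
  - right; right. auto.
Qed.

Lemma foldsw_PC L : PCf (foldsw L).
Proof. apply (fin_PC _ _ (foldsw_supp L)). Qed.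

Lemma eps_id : eps (fun x => x) = false.
Proof.
  assert (V : valid (fun x => x) [pt0]).
  { split; [left; auto|]. intros x _ e He. exists e; split; auto. }
  destruct (good_exists _ (proj1 V)) as [S G].
  rewrite (eps_good _ _ S (fun x y h => h) V G). apply Qb_false.
  intros; unfold inv. apply xorb_nilpotent.
Qed.

Lemma eps_fold L : (forall p, In p L -> fst p <> snd p) -> eps (foldsw L) = Nat.odd (length L).
Proof.
  induction L as [|[a b] L IH]; intros Hd.
  - apply eps_id.
  - change (foldsw ((a, b) :: L)) with (Defs.comp (swap a b) (foldsw L)).
    rewrite (eps_comp _ _ (foldsw (rev L)) (swap_inj a b) (foldsw_inverse L) (swap_PC a b) (foldsw_PC L) (foldsw_PC (rev L))).
    rewrite eps_swap by (apply (Hd (a,b)); left; auto).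
    rewrite IH by (intros; apply Hd; right; auto).
    simpl length. rewrite Nat.odd_succ, <- Nat.negb_odd. reflexivity.
Qed.

Lemma decomp : forall n (rho : Xmap) l, (length l <= n)%nat -> inj rho -> (forall x, rho x <> x -> In x l) ->
  exists L, (forall p, In p L -> fst p <> snd p) /\ forall x, rho x = foldsw L x.
Proof.
  induction n; intros rho l Hn Hi Hs.
  - exists []. split; [intros p []|]. intros x. destruct (eqX (rho x) x); auto.
    destruct l; [destruct (Hs x n)|simpl in Hn; lia].
  - destruct (classic (exists x, rho x <> x)) as [[x Hx]|Hno].
    + set (y := rho x).
      assert (nxy : x <> y) by (intros h; apply Hx; symmetry; exact h).
      set (rho' := fun z => swap x y (rho z)).
      assert (Hi' : inj rho') by (intros u v h; apply Hi, (swap_inj x y), h).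
      assert (Hs' : forall z, rho' z <> z -> In z (remove eqX x l)).
      { intros z hz. unfold rho' in hz.
        assert (zx : z <> x) by (intros ->; apply hz; fold y; apply swap_b).
        assert (rz : rho z <> z).
        { intros h. rewrite h in hz. apply hz, swap_other; auto. intros ->. apply nxy. apply Hi. symmetry. exact h. }
        apply in_in_remove; auto. }
      destruct (IHn rho' (remove eqX x l)) as [L [HL1 HL2]]; auto.
      { pose proof (remove_length_lt eqX l x (Hs x Hx)). lia. }
      exists ((x, y) :: L). split.
      * intros p [<-|Hp]; auto.
      * intros z. change (foldsw ((x, y) :: L) z) with (swap x y (foldsw L z)). rewrite <- HL2. unfold rho'. rewrite swap_invol. reflexivity.
    + exists []. split; [intros p []|]. intros x. destruct (eqX (rho x) x); auto. exfalso; eauto.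
Qed.

Lemma conj_swap h hi a b u : is_inverse h hi -> hi (swap a b (h u)) = swap (hi a) (hi b) u.
Proof.
  intros [H1 H2].
  destruct (eqX u (hi a)) as [->|na].
  - rewrite H2, swap_a, swap_a. reflexivity.
  - destruct (eqX u (hi b)) as [->|nb].
    + rewrite H2, swap_b, swap_b. reflexivity.
    + rewrite (swap_other (hi a) (hi b) u) by auto. rewrite swap_other, H1; auto.
      * intros h'. apply na. rewrite <- h'. symmetry. apply H1.
      * intros h'. apply nb. rewrite <- h'. symmetry. apply H1.
Qed.

Lemma even3 (e2 e3 : bool) :
  Nat.Even (length ((if xorb e2 e3 then [(pt0,ph)] else []) ++ (if e2 then [(pt0,ph)] else []) ++ (if e3 then [(pt0,ph)] else []))).
Proof. destruct e2, e3; simpl; [exists 1%nat| exists 1%nat | exists 1%nat | exists 0%nat]; reflexivity. Qed.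

Lemma even_mid (e : bool) (Ls : list (X*X)) :
  Nat.Even (length ((if e then [(pt0,ph)] else []) ++ Ls ++ (if xorb e (Nat.odd (length Ls)) then [(pt0,ph)] else []))).
Proof.
  apply Nat.even_spec. rewrite !length_app, !Nat.even_add, <- Nat.negb_even.
  destruct e, (Nat.even (length Ls)); reflexivity.
Qed.

Theorem corollary1p2 (Ghat : Xmap -> Prop) :
  subgroup_PC_hat Ghat ->
  (forall f, S_fin f -> Ghat f) ->
  kapoudjian_split Ghat.
Proof.
  intros [HPC [Hid [Hcomp Hinv]]] HS.
  set (t0 := swap pt0 ph).
  assert (Ht0 : S_fin t0) by (split; [exists t0; apply swap_inverse| exists [pt0;ph]; apply swap_supp]).
  assert (Ft : forall g, Ghat g -> exists gi, is_inverse g gi /\ Ghat gi /\ PCf g /\ PCf gi /\ inj g).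
  { intros g Hg. destruct (HPC g Hg) as [[gi Hgi] Pg]. exists gi.
    assert (Ggi : Ghat gi) by (apply (Hinv g); auto).
    split; auto. split; auto. split; auto. split; [apply (HPC gi Ggi)|]. apply (inv_inj1 _ _ Hgi). }
  exists (fun g => if eps g then Defs.comp g t0 else g).
  split; [|split; [|split]].
  - intros g Hg. destruct (eps g); auto.
  - intros g g' Hg Hg' [gi [Hgi Hs]].
    destruct (Ft g Hg) as [gi0 [Hgi0 [_ [Pg [_ Ig]]]]].
    set (sigma := Defs.comp gi g') in *.
    destruct Hs as [[si Hsi] [l Hl]].
    assert (Isig : inj sigma) by apply (inv_inj1 _ _ Hsi).
    destruct (decomp (length l) sigma l (le_n _) Isig Hl) as [Ls [HLs1 HLs2]].
    assert (Esig : sigma = foldsw Ls) by (extensionality x; apply HLs2).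
    assert (Eg' : g' = Defs.comp g sigma).
    { extensionality x. unfold sigma, Defs.comp. symmetry. apply Hgi. }
    assert (Hsi_supp : forall x, si x <> x -> In x (map sigma l)).
    { intros x hx. rewrite <- (proj2 Hsi x). apply in_map, Hl. rewrite (proj2 Hsi x). auto. }
    assert (He' : eps g' = xorb (eps g) (Nat.odd (length Ls))).
    { rewrite Eg', (eps_comp g sigma si Ig Hsi Pg (fin_PC _ _ Hl) (fin_PC _ _ Hsi_supp)).
      rewrite Esig, eps_fold; auto. }
    exists (if eps g then Defs.comp t0 gi else gi). split.
    + destruct (eps g); split; intros x; unfold Defs.comp, t0.
      * rewrite (proj1 Hgi). apply swap_invol.
      * rewrite swap_invol. apply Hgi.
      * apply Hgi.
      * apply Hgi.
    + exists ((if eps g then [(pt0,ph)] else []) ++ Ls ++ (if eps g' then [(pt0,ph)] else [])).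
      split; [|split].
      * rewrite He'. apply even_mid.
      * intros p Hp. apply in_app_or in Hp as [Hp|Hp]; [|apply in_app_or in Hp as [Hp|Hp]]; auto.
        -- destruct (eps g); [destruct Hp as [<-|[]]; apply pt0_ph|destruct Hp].
        -- destruct (eps g'); [destruct Hp as [<-|[]]; apply pt0_ph|destruct Hp].
      * intros x. fold (foldsw ((if eps g then [(pt0,ph)] else []) ++ Ls ++ (if eps g' then [(pt0,ph)] else [])) x).
        rewrite !foldsw_app. rewrite <- HLs2. unfold sigma.
        destruct (eps g), (eps g'); reflexivity.
  - intros g h Hg Hh.
    destruct (Ft g Hg) as [gi [Hgi [_ [Pg [_ Ig]]]]].
    destruct (Ft h Hh) as [hi [Hhi [_ [Ph [Phi Ih]]]]].
    assert (He : eps (Defs.comp g h) = xorb (eps g) (eps h)) by (apply (eps_comp g h hi); auto).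
    assert (Ihi : inj hi) by apply (inv_inj2 _ _ Hhi).
    exists (if eps (Defs.comp g h) then Defs.comp t0 (Defs.comp hi gi) else Defs.comp hi gi). split.
    + destruct (eps (Defs.comp g h)); split; intros x; unfold Defs.comp, t0.
      * rewrite (proj1 Hgi), (proj1 Hhi). apply swap_invol.
      * rewrite swap_invol, (proj2 Hhi). apply Hgi.
      * rewrite (proj1 Hgi). apply Hhi.
      * rewrite (proj2 Hhi). apply Hgi.
    + exists ((if eps (Defs.comp g h) then [(pt0,ph)] else []) ++ (if eps g then [(hi pt0, hi ph)] else [])
              ++ (if eps h then [(pt0,ph)] else [])).
      split; [|split].
      * rewrite He. pose proof (even3 (eps g) (eps h)). destruct (eps g), (eps h); simpl in *; auto.
      * intros p Hp. apply in_app_or in Hp as [Hp|Hp]; [|apply in_app_or in Hp as [Hp|Hp]].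
        -- destruct (eps (Defs.comp g h)); [destruct Hp as [<-|[]]; apply pt0_ph|destruct Hp].
        -- destruct (eps g); [destruct Hp as [<-|[]]|destruct Hp]. simpl. intros hh. apply pt0_ph, Ihi, hh.
        -- destruct (eps h); [destruct Hp as [<-|[]]; apply pt0_ph|destruct Hp].
      * intros x. fold (foldsw ((if eps (Defs.comp g h) then [(pt0,ph)] else []) ++ (if eps g then [(hi pt0, hi ph)] else [])
              ++ (if eps h then [(pt0,ph)] else [])) x).
        rewrite !foldsw_app. rewrite He.
        destruct (eps g), (eps h); unfold Defs.comp, t0; simpl; unfold foldsw; simpl;
          rewrite ?(proj1 Hgi); try rewrite (conj_swap h hi pt0 ph); rewrite ?(proj1 Hhi); auto.
  - intros g Hg. destruct (HPC g Hg) as [[gi Hgi] _]. exists gi. split; auto.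
    destruct (eps g).
    + replace (Defs.comp gi (Defs.comp g t0)) with t0; auto.
      extensionality x. unfold Defs.comp. symmetry. apply Hgi.
    + replace (Defs.comp gi g) with (fun x : X => x).
      * split; [exists (fun x => x); split; auto| exists []; intros x H; exfalso; auto].
      * extensionality x. unfold Defs.comp. symmetry. apply Hgi.
Qed.
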